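(* Let $\phi\in C^3((0,\infty))$, $\eta=\phi'$ and $\hat\eta(r)=\eta(r)+2\eta(2r)$, and suppose there are constants $0<a_0<\tilde r_1<\tilde r_2<2a_0$ and $a_1>a_0$ such that: $\eta'(r)>0$ for $0<r<\tilde r_1$ and $\eta'(r)<0$ for $r>\tilde r_1$; $\eta''(r)<0$ for $0<r<\tilde r_2$ and $\eta''(r)>0$ for $r>\tilde r_2$; $\hat\eta(r)<0$ for $0<r<a_0$ and $\hat\eta(r)>0$ for $r>a_0$; $\hat\eta'(r)>0$ for $0<r<a_1$ and $\hat\eta'(r)<0$ for $r>a_1$. Let $N,K$ be integers with $K\ge2$ and $K<N-1$. For $\mathbf r=(r_{-N},\dots,r_N)\in(0,\infty)^{2N+1}$ define: (i) $F^{QCF}_j(\mathbf r)$, $j=-N,\dots,N+1$: $F^{QCF}_{-N}=\eta(r_{-N})+2\eta(2r_{-N})$; $F^{QCF}_j=[\eta(r_j)+2\eta(2r_j)]-[\eta(r_{j-1})+2\eta(2r_{j-1})]$ for $-N+1\le j\le -K$ and $K+1\le j\le N$; $F^{QCF}_j=[\eta(r_j)+\eta(r_j+r_{j+1})]-[\eta(r_{j-1})+\eta(r_{j-1}+r_{j-2})]$ for $-K+1\le j\le K$; $F^{QCF}_{N+1}=-[\eta(r_N)+2\eta(2r_N)]$. (ii) $\psi^E_j(\mathbf r)$, $j=-N-1,\dots,N+1$: $\psi^E_{-N-1}=\psi^E_{N+1}=0$; $\psi^E_j=\eta(r_j)+2\eta(2r_j)$ for $-N\le j\le -K-2$ and $K+2\le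 j\le N$; $\psi^E_{-K-1}=\eta(r_{-K-1})+2\eta(2r_{-K-1})+\tfrac12\eta(r_{-K-1}+r_{-K})$; $\psi^E_{-K}=\eta(r_{-K})+\tfrac12\eta(r_{-K}+r_{-K-1})+\tfrac12\eta(r_{-K}+r_{-K+1})+\eta(2r_{-K})$; $\psi^E_{-K+1}=\eta(r_{-K+1})+\tfrac12\eta(r_{-K+1}+r_{-K})+\eta(r_{-K+1}+r_{-K+2})$; $\psi^E_j=\eta(r_j)+\eta(r_j+r_{j-1})+\eta(r_j+r_{j+1})$ for $-K+2\le j\le K-2$; $\psi^E_{K-1}=\eta(r_{K-1})+\eta(r_{K-1}+r_{K-2})+\tfrac12\eta(r_{K-1}+r_K)$; $\psi^E_K=\eta(r_K)+\tfrac12\eta(r_K+r_{K-1})+\tfrac12\eta(r_K+r_{K+1})+\eta(2r_K)$; $\psi^E_{K+1}=\eta(r_{K+1})+2\eta(2r_{K+1})+\tfrac12\eta(r_{K+1}+r_K)$. (iii) $F^{QCE}_j(\mathbf r)=\psi^E_j(\mathbf r)-\psi^E_{j-1}(\mathbf r)$ and $F^G_j(\mathbf r)=F^{QCF}_j(\mathbf r)-F^{QCE}_j(\mathbf r)$ for $j=-N,\dots,N+1$. Let $f_{-N},\dots,f_{N+1}\in\mathbb R$ be anti-symmetric, i.e. $f_{j+1}=-f_{-j}$ for $j=0,\dots,N$, and set $\Phi_j=-\sum_{i=-N}^{j}f_i$ for $j=-N,\dots,N$. Suppose $r_L,r_U$ satisfy $\tilde r_2/2<r_L<r_U$ and $\eta'(r_U)+13\eta'(2r_L)>0$,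 and $\eta(r_L)+4\eta(2r_L)-2\eta(2r_U)<\Phi_j<\eta(r_U)+4\eta(2r_U)-2\eta(2r_L)$ for $j=-N,\dots,N$. Then for every symmetric $\mathbf r^n\in\Omega=(r_L,r_U)^{2N+1}$ there is a unique symmetric $\mathbf r^{n+1}\in\Omega$ such that $F^{QCE}_j(\mathbf r^{n+1})+F^G_j(\mathbf r^n)+f_j=0$ for $j=-N,\dots,N+1$. The induced mapping $\mathbf r^n\mapsto\mathbf r^{n+1}$ is a contraction satisfying, for symmetric $\mathbf r^n,\mathbf s^n\in\Omega$ with images $\mathbf r^{n+1},\mathbf s^{n+1}$, $\|\mathbf r^{n+1}-\mathbf s^{n+1}\|_\infty\le\frac{8|\eta'(2r_L)|}{\eta'(r_U)-5|\eta'(2r_L)|}\|\mathbf r^n-\mathbf s^n\|_\infty$, where $\frac{8|\eta'(2r_L)|}{\eta'(r_U)-5|\eta'(2r_L)|}<1$; and the iterates $\mathbf r^n$ converge to the unique symmetric $\mathbf r\in\Omega$ satisfying the force-based quasicontinuum equations $F^{QCF}_j(\mathbf r)+f_j=0$, $j=-N,\dots,N+1$.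
   Context: A vector $\mathbf r$ is symmetric if $r_{-j}=r_j$ for $j=1,\dots,N$; $\|\mathbf r\|_\infty=\max_i|r_i|$. $F^{QCF}$, $F^{QCE}$ and $F^G$ are the force-based quasicontinuum forces, energy-based quasicontinuum forces and ghost-force corrections on the representative atoms of a one-dimensional chain with nearest and next-nearest neighbour pair interactions given by $\phi$, expressed in the lattice spacings $r_j$; $f_j$ are external forces. *)

(* Defs.v *)
From Stdlib Require Import Reals Lra Lia ZArith List Bool.
From Coquelicot Require Import Coquelicot.
Open Scope R_scope.

Definition zrange (a b : Z) : list Z :=
  map (fun k => (a + Z.of_nat k)%Z) (seq 0 (Z.to_nat (b - a + 1))).

Definition zsum (a b : Z) (g : Z -> R) : R :=
  fold_right Rplus 0 (map g (zrange a b)).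

Definition norm_inf (N : Z) (v : Z -> R) : R :=
  fold_right Rmax 0 (map (fun j => Rabs (v j)) (zrange (- N) N)).

Definition etahat (eta : R -> R) (r : R) : R := eta r + 2 * eta (2 * r).

Definition FQCF (eta : R -> R) (N K : Z) (r : Z -> R) (j : Z) : R :=
  if (j =? - N)%Z then etahat eta (r (- N)%Z)
  else if (j =? N + 1)%Z then - etahat eta (r N)
  else if (andb (- K + 1 <=? j) (j <=? K))%Z then
    (eta (r j) + eta (r j + r (j + 1)%Z))
    - (eta (r (j - 1)%Z) + eta (r (j - 1)%Z + r (j - 2)%Z))
  else etahat eta (r j) - etahat eta (r (j - 1)%Z).

Definition psiE (eta : R -> R) (N K : Z) (r : Z -> R) (j : Z) : R :=
  if (orb (j =? - N - 1) (j =? N + 1))%Z then 0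
  else if (j =? - K - 1)%Z then
    eta (r j) + 2 * eta (2 * r j) + / 2 * eta (r j + r (j + 1)%Z)
  else if (j =? - K)%Z then
    eta (r j) + / 2 * eta (r j + r (j - 1)%Z) + / 2 * eta (r j + r (j + 1)%Z)
    + eta (2 * r j)
  else if (j =? - K + 1)%Z then
    eta (r j) + / 2 * eta (r j + r (j - 1)%Z) + eta (r j + r (j + 1)%Z)
  else if (j =? K - 1)%Z then
    eta (r j) + eta (r j + r (j - 1)%Z) + / 2 * eta (r j + r (j + 1)%Z)
  else if (j =? K)%Z then
    eta (r j) + / 2 * eta (r j + r (j - 1)%Z) + / 2 * eta (r j + r (j + 1)%Z)
    + eta (2 * r j)
  else if (j =? K + 1)%Z then
    eta (r j) + 2 * eta (2 * r j) + / 2 * eta (r j + r (j - 1)%Z)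
  else if (andb (- K + 2 <=? j) (j <=? K - 2))%Z then
    eta (r j) + eta (r j + r (j - 1)%Z) + eta (r j + r (j + 1)%Z)
  else etahat eta (r j).

Definition FQCE (eta : R -> R) (N K : Z) (r : Z -> R) (j : Z) : R :=
  psiE eta N K r j - psiE eta N K r (j - 1)%Z.

Definition FG (eta : R -> R) (N K : Z) (r : Z -> R) (j : Z) : R :=
  FQCF eta N K r j - FQCE eta N K r j.

Definition symmetric (N : Z) (r : Z -> R) : Prop :=
  forall j : Z, (1 <= j <= N)%Z -> r (- j)%Z = r j.

Definition in_Omega (N : Z) (rL rU : R) (r : Z -> R) : Prop :=
  forall j : Z, (- N <= j <= N)%Z -> rL < r j < rU.

Definition gfc_step (eta : R -> R) (N K : Z) (f : Z -> R) (rn rn1 : Z -> R) : Prop :=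
  forall j : Z, (- N <= j <= N + 1)%Z ->
    FQCE eta N K rn1 j + FG eta N K rn j + f j = 0.

Definition qcf_eq (eta : R -> R) (N K : Z) (f : Z -> R) (r : Z -> R) : Prop :=
  forall j : Z, (- N <= j <= N + 1)%Z -> FQCF eta N K r j + f j = 0.

(* Main.v *)
Require Import Defs.
From Stdlib Require Import Reals Lra Lia ZArith List Bool ClassicalEpsilon.
From Coquelicot Require Import Coquelicot.
Open Scope R_scope.

Lemma Zind_range (a b : Z) (P : Z -> Prop) :
  P a -> (forall j, (a < j <= b)%Z -> P (j-1)%Z -> P j) ->
  forall j, (a <= j <= b)%Z -> P j.
Proof.
  intros H0 HS j Hj.
  assert (H : forall n : nat, (a + Z.of_nat n <= b)%Z -> P (a + Z.of_nat n)%Z).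
  { induction n as [|n IH]; intros Hn.
    - simpl. rewrite Z.add_0_r. exact H0.
    - apply HS; [lia|]. replace (a + Z.of_nat (S n) - 1)%Z with (a + Z.of_nat n)%Z by lia.
      apply IH; lia. }
  replace j with (a + Z.of_nat (Z.to_nat (j - a)))%Z by lia. apply H; lia.
Qed.

Lemma fold_plus_shift (l : list R) (s : R) :
  fold_right Rplus s l = fold_right Rplus 0 l + s.
Proof. induction l as [|x l IH]; simpl; [ring| rewrite IH; ring]. Qed.

Lemma zsum_nil a b g : (b < a)%Z -> zsum a b g = 0.
Proof.
  intros H. unfold zsum, zrange. replace (Z.to_nat (b - a + 1)) with 0%nat by lia.
  reflexivity.
Qed.

Lemma zsum_S a b g : (a <= b)%Z -> zsum a b g = zsum a (b-1) g + g b.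
Proof.
  intros H. unfold zsum, zrange.
  replace (Z.to_nat (b - a + 1)) with (S (Z.to_nat (b - 1 - a + 1))) by lia.
  rewrite seq_S, map_app, map_app, fold_right_app. simpl.
  rewrite fold_plus_shift. replace (a + Z.of_nat (Z.to_nat (b - 1 - a + 1)))%Z with b by lia.
  ring.
Qed.



Lemma zsum_split a b c g : (a - 1 <= b <= c)%Z ->
  zsum a c g = zsum a b g + zsum (b+1) c g.
Proof.
  intros [H1 H2].
  assert (Hgen : forall c, (b <= c <= c)%Z -> zsum a c g = zsum a b g + zsum (b+1) c g).
  { intros c0 [Hc0 _].
    apply (Zind_range b c0 (fun c => zsum a c g = zsum a b g + zsum (b+1) c g)); [| |lia].
    - rewrite (zsum_nil (b+1) b) by lia. ring.
    - intros j Hj IH. rewrite (zsum_S a j) by lia. rewrite (zsum_S (b+1) j) by lia.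
      rewrite IH. ring. }
  apply Hgen; lia.
Qed.

Lemma zsum_L a b g : (a <= b)%Z -> zsum a b g = g a + zsum (a+1) b g.
Proof.
  intros H. rewrite (zsum_split a a b) by lia. rewrite zsum_S by lia.
  rewrite zsum_nil by lia. ring.
Qed.

Lemma in_zrange a b x : In x (zrange a b) <-> (a <= x <= b)%Z.
Proof.
  unfold zrange. rewrite in_map_iff. split.
  - intros [k [Hk Hin]]. apply in_seq in Hin. lia.
  - intros H. exists (Z.to_nat (x - a)). split; [lia|]. apply in_seq. lia.
Qed.

Lemma fmax_ge (h : Z -> R) l x : In x l -> h x <= fold_right Rmax 0 (map h l).
Proof.
  induction l as [|y l IH]; simpl; [tauto|]. intros [->|Hx].
  - apply Rmax_l.
  - eapply Rle_trans; [apply IH; exact Hx| apply Rmax_r].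
Qed.

Lemma fmax_le (h : Z -> R) l c : 0 <= c -> (forall x, In x l -> h x <= c) ->
  fold_right Rmax 0 (map h l) <= c.
Proof.
  intros Hc. induction l as [|y l IH]; simpl; intros H; [exact Hc|].
  apply Rmax_case; [apply H; auto| apply IH; auto].
Qed.

Lemma fmax_att (h : Z -> R) l : (forall x, 0 <= h x) -> l <> nil ->
  exists x, In x l /\ fold_right Rmax 0 (map h l) = h x.
Proof.
  intros Hp. induction l as [|y l IH]; [tauto|]. intros _.
  destruct l as [|z l'].
  - exists y. split; [left; auto|]. simpl. apply Rmax_left. apply Hp.
  - destruct IH as [x [Hx Heq]]; [discriminate|].
    simpl map. cbn [fold_right]. unfold Rmax at 1. destruct (Rle_dec (h y) _) as [Hle|Hle].
    + exists x. split; [right; exact Hx|]. simpl in Heq. exact Heq.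
    + exists y. split; [left; auto|]. reflexivity.
Qed.

Lemma norm_ge N v j : (- N <= j <= N)%Z -> Rabs (v j) <= norm_inf N v.
Proof. intros H. unfold norm_inf. apply (fmax_ge (fun j => Rabs (v j))). apply in_zrange; auto. Qed.

Lemma norm_le N v c : 0 <= c -> (forall j, (- N <= j <= N)%Z -> Rabs (v j) <= c) -> norm_inf N v <= c.
Proof. intros Hc H. unfold norm_inf. apply fmax_le; auto. intros x Hx. apply H. apply in_zrange; auto. Qed.

Lemma norm_nonneg N v : 0 <= norm_inf N v.
Proof.
  unfold norm_inf. induction (zrange (-N) N) as [|y l IH]; simpl; [lra|].
  eapply Rle_trans; [exact IH| apply Rmax_r].
Qed.

Lemma norm_att N v : (0 <= N)%Z -> exists j, (- N <= j <= N)%Z /\ norm_inf N v = Rabs (v j).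
Proof.
  intros HN. unfold norm_inf. destruct (fmax_att (fun j => Rabs (v j)) (zrange (-N) N)) as [x [Hx Heq]].
  - intros; apply Rabs_pos.
  - intros Hn. assert (Hin : In 0%Z (zrange (-N) N)) by (apply in_zrange; lia). rewrite Hn in Hin. exact Hin.
  - exists x. split; [apply in_zrange; auto| exact Heq].
Qed.


Lemma geom_zero z B c : 0 <= c < 1 -> 0 <= B -> (forall n, z <= B * c ^ n) -> z <= 0.
Proof.
  intros Hc HB H. destruct (Rle_or_lt z 0) as [Hz|Hz]; [exact Hz|].
  destruct (pow_lt_1_zero c) with (y := z / (B + 1)) as [M HM].
  - rewrite Rabs_pos_eq; lra.
  - apply Rdiv_lt_0_compat; lra.
  - specialize (HM M (le_n M)). rewrite Rabs_pos_eq in HM by (apply pow_le; lra).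
    specialize (H M). apply (Rmult_lt_compat_r (B+1)) in HM; [|lra].
    unfold Rdiv in HM. rewrite Rmult_assoc, Rinv_l, Rmult_1_r in HM by lra.
    assert (0 <= c ^ M) by (apply pow_le; lra). nra.
Qed.

Lemma Un_cv_bound (u : nat -> R) l a B : Un_cv u l -> (forall m, (m >= 0)%nat -> Rabs (u m - a) <= B) -> True.
Proof. auto. Qed.

Lemma lim_bound (u : nat -> R) l a B n0 : Un_cv u l -> (forall m, (m >= n0)%nat -> Rabs (u m - a) <= B) ->
  Rabs (l - a) <= B.
Proof.
  intros Hu H. destruct (Rle_or_lt (Rabs (l - a)) B) as [h|h]; [exact h|].
  destruct (Hu (Rabs (l - a) - B)) as [M HM]; [lra|].
  specialize (HM (max M n0) (Nat.le_max_l _ _)). specialize (H (max M n0) (Nat.le_max_r _ _)).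
  unfold R_dist in HM.
  assert (Rabs (l - a) <= Rabs (l - u (max M n0)) + Rabs (u (max M n0) - a)).
  { replace (l - a) with ((l - u (max M n0)) + (u (max M n0) - a)) by ring. apply Rabs_triang. }
  rewrite Rabs_minus_sym in HM. lra.
Qed.

Lemma lim_in u l a b : Un_cv u l -> (forall n, a <= u n <= b) -> a <= l <= b.
Proof.
  intros Hu H. split.
  - destruct (Rle_or_lt a l) as [h|h]; [exact h|].
    destruct (Hu (a - l)) as [M HM]; [lra|]. specialize (HM M (le_n M)). specialize (H M).
    unfold R_dist in HM. apply Rabs_def2 in HM. lra.
  - destruct (Rle_or_lt l b) as [h|h]; [exact h|].
    destruct (Hu (l - b)) as [M HM]; [lra|]. specialize (HM M (le_n M)). specialize (H M).
    unfold R_dist in HM. apply Rabs_def2 in HM. lra.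
Qed.

Lemma banach (N : Z) (P : (Z -> R) -> Prop) (Phi : (Z -> R) -> (Z -> R)) (c : R) (x0 : Z -> R) :
  (0 <= N)%Z -> 0 <= c < 1 -> P x0 -> (forall x, P x -> P (Phi x)) ->
  (forall x y, P x -> P y ->
     norm_inf N (fun j => Phi x j - Phi y j) <= c * norm_inf N (fun j => x j - y j)) ->
  (forall (u : nat -> Z -> R) (l : Z -> R), (forall n, P (u n)) ->
     (forall j, (- N <= j <= N)%Z -> Un_cv (fun n => u n j) (l j)) -> P l) ->
  exists x, P x /\ forall j, (- N <= j <= N)%Z -> Phi x j = x j.
Proof.
  intros HN Hc HP0 HPP Hcon Hcl.
  set (u := fun n => Nat.iter n Phi x0).
  assert (Pu : forall n, P (u n)).
  { induction n; simpl; auto. }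
  set (D := norm_inf N (fun j => u 1%nat j - u 0%nat j)).
  assert (HD : 0 <= D) by apply norm_nonneg.
  assert (Hstep : forall n, norm_inf N (fun j => u (S n) j - u n j) <= c ^ n * D).
  { induction n as [|n IH]. - rewrite pow_O, Rmult_1_l. apply Rle_refl.
    - change (u (S (S n))) with (Phi (u (S n))). change (u (S n)) with (Phi (u n)) at 2.
      eapply Rle_trans; [apply Hcon; auto|]. simpl. change (Phi (u n)) with (u (S n)).
      apply Rmult_le_compat_l with (r := c) in IH; [|lra]. lra. }
  assert (Hcoord : forall j, (- N <= j <= N)%Z -> forall n k,
             Rabs (u (n + k)%nat j - u n j) <= D * (c ^ n - c ^ (n + k)) / (1 - c)).
  { intros j Hj n k. induction k as [|k IH].
    - rewrite Nat.add_0_r. replace (u n j - u n j) with 0 by ring. rewrite Rabs_R0.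
      replace (D * (c ^ n - c ^ n) / (1 - c)) with 0 by (field; lra). lra.
    - rewrite Nat.add_succ_r.
      replace (u (S (n + k)) j - u n j) with ((u (S (n+k)) j - u (n+k)%nat j) + (u (n+k)%nat j - u n j)) by ring.
      eapply Rle_trans; [apply Rabs_triang|].
      assert (H1 : Rabs (u (S (n+k)) j - u (n+k)%nat j) <= c ^ (n+k) * D).
      { eapply Rle_trans; [apply (norm_ge N (fun j => u (S (n+k)) j - u (n+k)%nat j)); exact Hj| apply Hstep]. }
      replace (D * (c ^ n - c ^ S (n + k)) / (1 - c)) with (c ^ (n+k) * D + D * (c ^ n - c ^ (n + k)) / (1 - c))
        by (simpl; field; lra). lra. }
  assert (Hcoord2 : forall j, (- N <= j <= N)%Z -> forall n m, (m >= n)%nat ->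
             Rabs (u m j - u n j) <= D * c ^ n / (1 - c)).
  { intros j Hj n m Hm. replace m with (n + (m - n))%nat by lia.
    eapply Rle_trans; [apply Hcoord; auto|].
    assert (0 <= c ^ (n + (m - n))) by (apply pow_le; lra).
    apply Rmult_le_compat_r; [apply Rlt_le, Rinv_0_lt_compat; lra|]. nra. }
  assert (Hcauchy : forall j, (- N <= j <= N)%Z -> Cauchy_crit (fun n => u n j)).
  { intros j Hj eps Heps.
    destruct (pow_lt_1_zero c) with (y := eps * (1 - c) / (D + 1)) as [M HM].
    - rewrite Rabs_pos_eq; lra.
    - apply Rdiv_lt_0_compat; [apply Rmult_lt_0_compat|]; lra.
    - exists M. intros n m Hn Hm. unfold R_dist.
      assert (Hb : forall p q, (p >= M)%nat -> (q >= p)%nat -> Rabs (u q j - u p j) < eps).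
      { intros p q Hp Hq. eapply Rle_lt_trans; [apply Hcoord2; auto|].
        specialize (HM p Hp). rewrite Rabs_pos_eq in HM by (apply pow_le; lra).
        apply Rmult_lt_reg_r with (r := 1 - c); [lra|].
        unfold Rdiv. rewrite Rmult_assoc, Rinv_l, Rmult_1_r by lra.
        apply (Rmult_lt_compat_r (D + 1)) in HM; [|lra].
        unfold Rdiv in HM. rewrite (Rmult_assoc (eps * (1 - c))), Rinv_l, Rmult_1_r in HM by lra.
        assert (0 <= c ^ p) by (apply pow_le; lra). nra. }
      destruct (Nat.le_ge_cases n m) as [h|h].
      + rewrite Rabs_minus_sym. apply Hb; lia.
      + apply Hb; lia. }
  set (l := fun j => real (Lim_seq (fun n => u n j))).
  assert (Hl : forall j, (- N <= j <= N)%Z -> Un_cv (fun n => u n j) (l j)).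
  { intros j Hj. destruct (Rcomplete.R_complete _ (Hcauchy j Hj)) as [l0 Hl0].
    unfold l. replace (Lim_seq (fun n => u n j)) with (Finite l0).
    - exact Hl0.
    - symmetry. apply is_lim_seq_unique. apply is_lim_seq_Reals. exact Hl0. }
  assert (Hlb : forall j, (- N <= j <= N)%Z -> forall n, Rabs (l j - u n j) <= D * c ^ n / (1 - c)).
  { intros j Hj n. apply (lim_bound (fun m => u m j) (l j) (u n j) _ n); [apply Hl; auto|].
    intros m Hm. apply Hcoord2; auto. }
  assert (HPl : P l) by (apply (Hcl u l Pu Hl)).
  exists l. split; [exact HPl|]. intros j Hj.
  assert (Hz : Rabs (Phi l j - l j) <= 0).
  { apply (geom_zero _ (2 * c * D / (1 - c)) c Hc).
    - apply Rmult_le_pos; [|apply Rlt_le, Rinv_0_lt_compat; lra]. nra.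
    - intros n. 
      replace (Phi l j - l j) with ((Phi l j - u (S n) j) + (u (S n) j - l j)) by ring.
      eapply Rle_trans; [apply Rabs_triang|].
      assert (H1 : Rabs (Phi l j - u (S n) j) <= c * (D * c ^ n / (1 - c))).
      { change (u (S n)) with (Phi (u n)).
        eapply Rle_trans; [apply (norm_ge N (fun j => Phi l j - Phi (u n) j)); exact Hj|].
        eapply Rle_trans; [apply Hcon; auto|]. apply Rmult_le_compat_l; [lra|].
        apply norm_le. { apply Rmult_le_pos; [|apply Rlt_le, Rinv_0_lt_compat; lra]. 
                         apply Rmult_le_pos; [lra| apply pow_le; lra]. }
        intros i Hi. apply Hlb; auto. }
      assert (H2 : Rabs (u (S n) j - l j) <= D * c ^ (S n) / (1 - c)).
      { rewrite Rabs_minus_sym. apply Hlb; auto. }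
      change (c ^ S n) with (c * c ^ n) in H2.
      replace (2 * c * D / (1 - c) * c ^ n) with (c * (D * c ^ n / (1 - c)) + D * (c * c ^ n) / (1 - c))
        by (field; lra). lra. }
  assert (Rabs (Phi l j - l j) = 0) by (pose proof (Rabs_pos (Phi l j - l j)); lra).
  apply Rabs_eq_0 in H. lra.
Qed.


Lemma mvt_pos (f f' : R -> R) (Hf : forall x, 0 < x -> is_derive f x (f' x)) a b :
  0 < a -> a < b -> exists c, a < c < b /\ f b - f a = f' c * (b - a).
Proof.
  intros Ha Hab. destruct (MVT_cor2 f f' a b Hab) as [c [Hc1 Hc2]].
  - intros c Hc. apply is_derive_Reals. apply Hf. lra.
  - exists c. split; auto.
Qed.

Section Ana.
Variables (eta eta1 eta2 : R -> R).
Hypothesis Heta : forall r, 0 < r -> is_derive eta r (eta1 r).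
Hypothesis Heta1 : forall r, 0 < r -> is_derive eta1 r (eta2 r).
Variables (r1t r2t : R).
Hypothesis Hr1 : 0 < r1t.
Hypothesis Hr12 : r1t < r2t.
Hypothesis H1b : forall r, r > r1t -> eta1 r < 0.
Hypothesis H2a : forall r, 0 < r < r2t -> eta2 r < 0.
Hypothesis H2b : forall r, r > r2t -> eta2 r > 0.
Variables (rL rU : R).
Hypothesis HrL : r2t / 2 < rL.
Hypothesis HrLU : rL < rU.
Hypothesis Hder : eta1 rU + 13 * eta1 (2 * rL) > 0.

Definition dd := eta1 rU.
Definition ee := - eta1 (2 * rL).

Lemma ee_pos : 0 < ee.
Proof. unfold ee. assert (eta1 (2 * rL) < 0) by (apply H1b; lra). lra. Qed.

Lemma dd_gt : dd > 13 * ee.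
Proof. unfold dd, ee. lra. Qed.

Lemma rU_le : rU <= r2t.
Proof.
  destruct (Rle_or_lt rU r2t) as [h|h]; auto.
  assert (eta1 rU < 0) by (apply H1b; lra). assert (eta1 (2 * rL) < 0) by (apply H1b; lra). lra.
Qed.

Lemma eta1_low t : rL <= t <= rU -> dd <= eta1 t.
Proof.
  intros Ht. unfold dd. destruct (Req_dec t rU) as [->|hn]; [lra|].
  destruct (mvt_pos eta1 eta2 Heta1 t rU) as [c [Hc Heq]]; [lra|lra|].
  pose proof rU_le. assert (eta2 c < 0) by (apply H2a; lra). nra.
Qed.

Lemma eta1_2 t : 2 * rL <= t <= 2 * rU -> - ee <= eta1 t <= 0.
Proof.
  intros Ht. unfold ee. split.
  - destruct (Req_dec t (2 * rL)) as [->|hn]; [lra|].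
    destruct (mvt_pos eta1 eta2 Heta1 (2 * rL) t) as [c [Hc Heq]]; [lra|lra|].
    assert (eta2 c > 0) by (apply H2b; lra). nra.
  - assert (eta1 t < 0) by (apply H1b; lra). lra.
Qed.

Lemma eta_lip1 a b : rL <= a <= rU -> rL <= b <= rU -> dd * Rabs (a - b) <= Rabs (eta a - eta b).
Proof.
  intros Ha Hb. pose proof dd_gt. pose proof ee_pos.
  destruct (Rtotal_order a b) as [h|[h|h]].
  - destruct (mvt_pos eta eta1 Heta a b) as [c [Hc Heq]]; [lra|lra|].
    assert (dd <= eta1 c) by (apply eta1_low; lra).
    rewrite Rabs_minus_sym, (Rabs_minus_sym (eta a)), Heq.
    rewrite Rabs_mult, (Rabs_pos_eq (eta1 c)) by lra. 
    apply Rmult_le_compat_r; [apply Rabs_pos|lra].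
  - subst. replace (b - b) with 0 by ring. rewrite Rabs_R0. rewrite Rmult_0_r. apply Rabs_pos.
  - destruct (mvt_pos eta eta1 Heta b a) as [c [Hc Heq]]; [lra|lra|].
    assert (dd <= eta1 c) by (apply eta1_low; lra).
    rewrite Heq. rewrite Rabs_mult, (Rabs_pos_eq (eta1 c)) by lra.
    apply Rmult_le_compat_r; [apply Rabs_pos|lra].
Qed.

Lemma eta_lip2 a b : 2 * rL <= a <= 2 * rU -> 2 * rL <= b <= 2 * rU -> Rabs (eta a - eta b) <= ee * Rabs (a - b).
Proof.
  intros Ha Hb. pose proof ee_pos.
  destruct (Rtotal_order a b) as [h|[h|h]].
  - destruct (mvt_pos eta eta1 Heta a b) as [c [Hc Heq]]; [lra|lra|].
    assert (- ee <= eta1 c <= 0) by (apply eta1_2; lra).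
    rewrite Rabs_minus_sym, (Rabs_minus_sym a), Heq.
    rewrite Rabs_mult. apply Rmult_le_compat_r; [apply Rabs_pos|]. apply Rabs_le; lra.
  - subst. replace (b - b) with 0 by ring. replace (eta b - eta b) with 0 by ring. rewrite Rabs_R0. lra.
  - destruct (mvt_pos eta eta1 Heta b a) as [c [Hc Heq]]; [lra|lra|].
    assert (- ee <= eta1 c <= 0) by (apply eta1_2; lra).
    rewrite Heq. rewrite Rabs_mult. apply Rmult_le_compat_r; [apply Rabs_pos|]. apply Rabs_le; lra.
Qed.

Lemma eta_dec2 a b : 2 * rL <= a <= b -> b <= 2 * rU -> eta b <= eta a.
Proof.
  intros Ha Hb. destruct (Req_dec a b) as [->|hn]; [lra|].
  destruct (mvt_pos eta eta1 Heta a b) as [c [Hc Heq]]; [lra|lra|].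
  assert (- ee <= eta1 c <= 0) by (apply eta1_2; lra). nra.
Qed.

Lemma eta_cont t : 0 < t -> continuous eta t.
Proof. intros Ht. apply (@ex_derive_continuous R_AbsRing R_NormedModule). exists (eta1 t). apply Heta; auto. Qed.

End Ana.


Ltac dz := repeat (match goal with
 | |- context [Z.eqb ?a ?b] => destruct (Z.eqb_spec a b)
 | |- context [Z.leb ?a ?b] => destruct (Z.leb_spec a b)
 end; cbv beta iota delta [orb andb]; try lia).

Definition ca (K j : Z) : R := if (j <=? -K-1)%Z then 2 else if (j =? -K)%Z then 1 else 0.
Definition cb (K j : Z) : R := if (j <=? -K-1)%Z then 0 else if (j =? -K)%Z then /2
  else if (j =? -K+1)%Z then /2 else 1.
Definition cc (K j : Z) : R := if (j <=? -K-2)%Z then 0 else if (j =? -K-1)%Z then /2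
  else if (j =? -K)%Z then /2 else 1.
Definition ga (K j : Z) : R := if (j <=? -K-1)%Z then 0 else if (j =? -K)%Z then 1 else 2.
Definition gb (K j : Z) : R := if (j <=? -K-2)%Z then 0 else if (j =? -K-1)%Z then /2
  else if (j =? -K)%Z then /2 else 1.
Definition gc (K j : Z) : R := if (j <=? -K-1)%Z then 0 else if (j =? -K)%Z then /2
  else if (j =? -K+1)%Z then /2 else 1.

Lemma classify K j :
  ((j <= -K-2)%Z /\ ca K j = 2 /\ cb K j = 0 /\ cc K j = 0 /\ ga K j = 0 /\ gb K j = 0 /\ gc K j = 0) \/
  ((j = -K-1)%Z /\ ca K j = 2 /\ cb K j = 0 /\ cc K j = /2 /\ ga K j = 0 /\ gb K j = /2 /\ gc K j = 0) \/
  ((j = -K)%Z /\ ca K j = 1 /\ cb K j = /2 /\ cc K j = /2 /\ ga K j = 1 /\ gb K j = /2 /\ gc K j = /2) \/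
  ((j = -K+1)%Z /\ ca K j = 0 /\ cb K j = /2 /\ cc K j = 1 /\ ga K j = 2 /\ gb K j = 1 /\ gc K j = /2) \/
  ((-K+2 <= j)%Z /\ ca K j = 0 /\ cb K j = 1 /\ cc K j = 1 /\ ga K j = 2 /\ gb K j = 1 /\ gc K j = 1).
Proof.
  unfold ca, cb, cc, ga, gb, gc. dz; intuition lia.
Qed.

Section Comb.
Variable eta : R -> R.
Variables N K : Z.
Hypothesis HK : (2 <= K)%Z.
Hypothesis HKN : (K < N - 1)%Z.

Lemma psi_form r j : (- N <= j <= 0)%Z ->
  psiE eta N K r j = eta (r j) + ca K j * eta (2 * r j) + cb K j * eta (r j + r (j-1)%Z)
                     + cc K j * eta (r j + r (j+1)%Z).
Proof.
  intros Hj. unfold psiE, etahat, ca, cb, cc. dz; ring.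
Qed.

Lemma psi_mirror r j : (1 <= j <= N)%Z ->
  psiE eta N K r j = eta (r j) + ca K (-j) * eta (2 * r j) + cc K (-j) * eta (r j + r (j-1)%Z)
                     + cb K (-j) * eta (r j + r (j+1)%Z).
Proof.
  intros Hj. unfold psiE, etahat, ca, cb, cc. dz; ring.
Qed.

Lemma psi_bnd r j : (j = - N - 1 \/ j = N + 1)%Z -> psiE eta N K r j = 0.
Proof. intros Hj. unfold psiE. dz; reflexivity. Qed.

Lemma FQCF_first r : FQCF eta N K r (-N) = etahat eta (r (-N)%Z).
Proof. unfold FQCF. dz; reflexivity. Qed.

Lemma FQCF_outer r j : ((- N + 1 <= j <= - K) \/ (K + 1 <= j <= N))%Z ->
  FQCF eta N K r j = etahat eta (r j) - etahat eta (r (j-1)%Z).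
Proof. intros Hj. unfold FQCF. dz; reflexivity. Qed.

Lemma FQCF_inner r j : (- K + 1 <= j <= K)%Z ->
  FQCF eta N K r j = (eta (r j) + eta (r j + r (j + 1)%Z))
    - (eta (r (j - 1)%Z) + eta (r (j - 1)%Z + r (j - 2)%Z)).
Proof. intros Hj. unfold FQCF. dz; reflexivity. Qed.

Lemma FQCF_last r : FQCF eta N K r (N+1) = - etahat eta (r N).
Proof. unfold FQCF. dz; reflexivity. Qed.

Definition Q r j := zsum (- N) j (FQCF eta N K r).

Lemma Q1 r j : (- N <= j <= - K)%Z -> Q r j = etahat eta (r j).
Proof.
  revert j. apply (Zind_range (-N) (-K) (fun j => Q r j = etahat eta (r j))); unfold Q.
  - rewrite zsum_S by lia. rewrite zsum_nil by lia. rewrite FQCF_first. ring.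
  - intros i Hi IH. rewrite zsum_S by lia. rewrite IH. rewrite FQCF_outer by lia. ring.
Qed.

Definition HH r := eta (r (-K)%Z + r (-K+1)%Z) + eta (r (-K-1)%Z + r (-K)%Z).

Lemma Q2 r j : (- K <= j <= K)%Z ->
  Q r j = 2 * eta (2 * r (-K)%Z) + eta (r j) + eta (r j + r (j+1)%Z) + eta (r (j-1)%Z + r j) - HH r.
Proof.
  revert j. apply (Zind_range (-K) K (fun j => Q r j = 2 * eta (2 * r (-K)%Z) + eta (r j) + eta (r j + r (j+1)%Z) + eta (r (j-1)%Z + r j) - HH r)).
  - rewrite Q1 by lia. unfold etahat, HH. replace (-K-1)%Z with (-K-1)%Z by ring. ring.
  - intros i Hi IH. unfold Q in *. rewrite zsum_S by lia. rewrite IH. rewrite FQCF_inner by lia.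
    replace (i - 1 + 1)%Z with i by ring. replace (i - 1 - 1)%Z with (i - 2)%Z by ring.
    rewrite (Rplus_comm (r (i-2)%Z)). ring.
Qed.

Lemma Q3 r j : (K <= j <= N)%Z -> Q r j = Q r K + etahat eta (r j) - etahat eta (r K).
Proof.
  revert j. apply (Zind_range K N (fun j => Q r j = Q r K + etahat eta (r j) - etahat eta (r K))).
  - ring.
  - intros i Hi IH. unfold Q in *. rewrite zsum_S by lia. rewrite IH. rewrite FQCF_outer by lia. ring.
Qed.

Lemma Q4 r : Q r (N+1) = Q r N - etahat eta (r N).
Proof. unfold Q. rewrite zsum_S by lia. replace (N + 1 - 1)%Z with N by ring. rewrite FQCF_last. ring. Qed.

Lemma Gform r j : (- N <= j <= 0)%Z ->
  Q r j - psiE eta N K r j = ga K j * eta (2 * r (-K)%Z) - gb K j * eta (r (-K-1)%Z + r (-K)%Z)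
     - gc K j * eta (r (-K)%Z + r (-K+1)%Z).
Proof.
  intros Hj. rewrite psi_form by lia.
  destruct (classify K j) as [[h [-> [-> [-> [-> [-> ->]]]]]]|[[h [-> [-> [-> [-> [-> ->]]]]]]|[[h [-> [-> [-> [-> [-> ->]]]]]]|[[h [-> [-> [-> [-> [-> ->]]]]]]|[h [-> [-> [-> [-> [-> ->]]]]]]]]]].
  - rewrite Q1 by lia. unfold etahat. ring.
  - rewrite Q1 by lia. unfold etahat. subst j. replace (-K-1+1)%Z with (-K)%Z by ring. ring.
  - rewrite Q2 by lia. unfold HH. subst j. replace (-K+1)%Z with (-K+1)%Z by ring.
    rewrite (Rplus_comm (r (-K)%Z) (r (-K-1)%Z)). ring.
  - rewrite Q2 by lia. unfold HH. subst j. replace (-K+1-1)%Z with (-K)%Z by ring.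
    rewrite (Rplus_comm (r (-K+1)%Z) (r (-K)%Z)). ring.
  - rewrite Q2 by lia. unfold HH. rewrite (Rplus_comm (r j) (r (j-1)%Z)). ring.
Qed.

Lemma sym_m1 r j : symmetric N r -> (1 <= j <= N)%Z -> r (-j+1)%Z = r (j-1)%Z.
Proof.
  intros Hs Hj. destruct (Z.eq_dec j 1) as [->|hn]; [reflexivity|].
  replace (-j+1)%Z with (-(j-1))%Z by ring. apply Hs. lia.
Qed.

Lemma sym_p1 r j : symmetric N r -> (1 <= j <= N - 1)%Z -> r (-j-1)%Z = r (j+1)%Z.
Proof.
  intros Hs Hj. replace (-j-1)%Z with (-(j+1))%Z by ring. apply Hs. lia.
Qed.

Lemma QK r : symmetric N r -> Q r K = etahat eta (r K).
Proof.
  intros Hs. 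
  assert (H0 : Q r (N+1) = Q r K - etahat eta (r K)).
  { rewrite Q4. rewrite Q3 by lia. ring. }
  rewrite Q2 by lia. unfold HH, etahat.
  rewrite (Hs K) by lia. rewrite (sym_m1 r K Hs) by lia. rewrite (sym_p1 r K Hs) by lia.
  rewrite (Rplus_comm (r (K+1)%Z) (r K)), (Rplus_comm (r K) (r (K-1)%Z)). ring.
Qed.

Lemma Q_total r : symmetric N r -> Q r (N+1) = 0.
Proof. intros Hs. rewrite Q4, Q3 by lia. rewrite QK by auto. ring. Qed.

Lemma Q_sym r j : symmetric N r -> (1 <= j <= N)%Z -> Q r j = Q r (-j).
Proof.
  intros Hs Hj. destruct (Z.le_gt_cases j K) as [h|h].
  - rewrite Q2 by lia. rewrite (Q2 r (-j)) by lia.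
    rewrite (Hs j) by lia. rewrite (sym_m1 r j Hs) by lia. rewrite (sym_p1 r j Hs) by lia.
    rewrite (Rplus_comm (r (j+1)%Z) (r j)), (Rplus_comm (r j) (r (j-1)%Z)). ring.
  - rewrite Q3 by lia. rewrite QK by auto. rewrite Q1 by lia. rewrite (Hs j) by lia. ring.
Qed.

Lemma psi_sym r j : symmetric N r -> (1 <= j <= N)%Z -> psiE eta N K r j = psiE eta N K r (-j).
Proof.
  intros Hs Hj. rewrite psi_mirror by lia. rewrite psi_form by lia.
  rewrite (Hs j) by lia. rewrite (sym_m1 r j Hs) by lia.
  destruct (Z.eq_dec j N) as [->|hn].
  - assert (cb K (-N) = 0) by (unfold cb; dz; reflexivity). rewrite H. ring.
  - rewrite (sym_p1 r j Hs) by lia. ring.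
Qed.

End Comb.


Section Step.
Variable eta : R -> R.
Variables N K : Z.
Hypothesis HK : (2 <= K)%Z.
Hypothesis HKN : (K < N - 1)%Z.
Variable f : Z -> R.
Hypothesis Hf : forall j : Z, (0 <= j <= N)%Z -> f (j + 1)%Z = - f (- j)%Z.

Lemma Fmid k : (0 <= k <= N + 1)%Z -> zsum (-k+1) k f = 0.
Proof.
  revert k. apply (Zind_range 0 (N+1) (fun k => zsum (-k+1) k f = 0)).
  - apply zsum_nil; lia.
  - intros k Hk IH. rewrite zsum_L by lia. rewrite zsum_S; [|lia].
    replace (-k+1+1)%Z with (-(k-1)+1)%Z by ring. rewrite IH.
    assert (Hfk : f k = - f (-k+1)%Z).
    { replace k with (k-1+1)%Z at 1 by ring. rewrite Hf by lia. do 2 f_equal. ring. }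
    rewrite Hfk. ring.
Qed.

Lemma F_total : zsum (-N) (N+1) f = 0.
Proof.
  rewrite (zsum_split (-N) (-(N+1)) (N+1)) by lia. rewrite zsum_nil by lia.
  rewrite Fmid by lia. ring.
Qed.

Lemma F_sym j : (1 <= j <= N)%Z -> zsum (-N) j f = zsum (-N) (-j) f.
Proof.
  intros Hj. rewrite (zsum_split (-N) (-j) j) by lia. rewrite Fmid by lia. ring.
Qed.

Definition gg r j := psiE eta N K r j - Q eta N K r j - zsum (-N) j f.

Lemma gg_first r : gg r (-N-1) = 0.
Proof.
  unfold gg, Q. rewrite psi_bnd by lia. rewrite !zsum_nil by lia. ring.
Qed.

Lemma gg_last r : symmetric N r -> gg r (N+1) = 0.
Proof.
  intros Hs. unfold gg. rewrite psi_bnd by lia. rewrite Q_total by auto. rewrite F_total. ring.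
Qed.

Lemma gg_sym r j : symmetric N r -> (1 <= j <= N)%Z -> gg r j = gg r (-j).
Proof.
  intros Hs Hj. unfold gg. rewrite psi_sym by auto. rewrite Q_sym by auto. rewrite F_sym by auto. ring.
Qed.

Lemma step_cum rn x : gfc_step eta N K f rn x ->
  forall j, (- N - 1 <= j <= N + 1)%Z -> psiE eta N K x j = gg rn j.
Proof.
  intros Hst. apply (Zind_range (-N-1) (N+1) (fun j => psiE eta N K x j = gg rn j)).
  - rewrite gg_first. apply psi_bnd; lia.
  - intros j Hj IH. specialize (Hst j ltac:(lia)). unfold FQCE, FG, FQCE in Hst.
    unfold gg, Q in *. rewrite (zsum_S (-N) j) by lia. rewrite (zsum_S (-N) j f) by lia.
    lra.
Qed.

Lemma step_of_cum rn x : (forall j, (- N <= j <= N + 1)%Z -> psiE eta N K x j = gg rn j) ->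
  gfc_step eta N K f rn x.
Proof.
  intros H. assert (H' : forall j, (- N - 1 <= j <= N + 1)%Z -> psiE eta N K x j = gg rn j).
  { intros j Hj. destruct (Z.eq_dec j (-N-1)) as [->|hn].
    - rewrite gg_first. apply psi_bnd; lia.
    - apply H. lia. }
  intros j Hj. unfold FQCE, FG, FQCE.
  rewrite (H' j) by lia. rewrite (H' (j-1)%Z) by lia. unfold gg, Q.
  rewrite (zsum_S (-N) j) by lia. rewrite (zsum_S (-N) j f) by lia. ring.
Qed.

Lemma qcf_step r : qcf_eq eta N K f r <-> gfc_step eta N K f r r.
Proof.
  unfold qcf_eq, gfc_step, FG. split; intros H j Hj; specialize (H j Hj); lra.
Qed.

End Step.


Lemma abs4 A B1 B2 B3 p q : p <= Rabs A -> Rabs (B1 + B2 + B3) <= q ->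
  p - q <= Rabs (A + B1 + B2 + B3).
Proof.
  intros HA HB. replace (A + B1 + B2 + B3) with (A + (B1 + B2 + B3)) by ring.
  pose proof (Rabs_triang (A + (B1 + B2 + B3)) (- (B1 + B2 + B3))).
  replace (A + (B1 + B2 + B3) + - (B1 + B2 + B3)) with A in H by ring.
  rewrite Rabs_Ropp in H. lra.
Qed.

Lemma abs3 B1 B2 B3 q1 q2 q3 : Rabs B1 <= q1 -> Rabs B2 <= q2 -> Rabs B3 <= q3 ->
  Rabs (B1 + B2 + B3) <= q1 + q2 + q3.
Proof.
  intros. eapply Rle_trans; [apply Rabs_triang|]. 
  pose proof (Rabs_triang B1 B2). lra.
Qed.

Lemma abs_scal c B q : 0 <= c -> Rabs B <= q -> Rabs (c * B) <= c * q.
Proof. intros. rewrite Rabs_mult, Rabs_pos_eq by auto. apply Rmult_le_compat_l; auto. Qed.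

Section Main.
Variables (eta eta1 eta2 : R -> R).
Hypothesis Heta : forall r, 0 < r -> is_derive eta r (eta1 r).
Hypothesis Heta1 : forall r, 0 < r -> is_derive eta1 r (eta2 r).
Variables (r1t r2t : R).
Hypothesis Hr1 : 0 < r1t.
Hypothesis Hr12 : r1t < r2t.
Hypothesis H1b : forall r, r > r1t -> eta1 r < 0.
Hypothesis H2a : forall r, 0 < r < r2t -> eta2 r < 0.
Hypothesis H2b : forall r, r > r2t -> eta2 r > 0.
Variables (rL rU : R).
Hypothesis HrL : r2t / 2 < rL.
Hypothesis HrLU : rL < rU.
Hypothesis Hder : eta1 rU + 13 * eta1 (2 * rL) > 0.
Variables N K : Z.
Hypothesis HK : (2 <= K)%Z.
Hypothesis HKN : (K < N - 1)%Z.
Variable f : Z -> R.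
Hypothesis Hf : forall j : Z, (0 <= j <= N)%Z -> f (j + 1)%Z = - f (- j)%Z.
Hypothesis HPhi : forall j : Z, (- N <= j <= N)%Z ->
     eta rL + 4 * eta (2 * rL) - 2 * eta (2 * rU) < - zsum (- N) j f /\
     - zsum (- N) j f < eta rU + 4 * eta (2 * rU) - 2 * eta (2 * rL).

Local Notation d := (dd eta1 rU).
Local Notation e := (ee eta1 rL).

Lemma rL_pos : 0 < rL.
Proof. lra. Qed.

Lemma e_pos : 0 < e.
Proof. apply (ee_pos eta1 r1t r2t); auto. Qed.
Lemma d_gt : d > 13 * e.
Proof. apply (dd_gt eta1 rL rU); auto. Qed.

Lemma lip1 a b : rL <= a <= rU -> rL <= b <= rU -> d * Rabs (a - b) <= Rabs (eta a - eta b).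
Proof. apply (eta_lip1 eta eta1 eta2 Heta Heta1 r1t r2t); auto. Qed.
Lemma lip2 a b : 2 * rL <= a <= 2 * rU -> 2 * rL <= b <= 2 * rU -> Rabs (eta a - eta b) <= e * Rabs (a - b).
Proof. apply (eta_lip2 eta eta1 eta2 Heta Heta1 r1t r2t); auto. Qed.
Lemma dec2 a b : 2 * rL <= a <= b -> b <= 2 * rU -> eta b <= eta a.
Proof. apply (eta_dec2 eta eta1 eta2 Heta Heta1 r1t r2t); auto. Qed.

Lemma pair_bnd a b : rL <= a <= rU -> rL <= b <= rU -> eta (2 * rU) <= eta (a + b) <= eta (2 * rL).
Proof. intros. split; apply dec2; lra. Qed.

Lemma pair_lip a b a' b' dl : rL <= a <= rU -> rL <= b <= rU -> rL <= a' <= rU -> rL <= b' <= rU ->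
  Rabs (a - a') <= dl -> Rabs (b - b') <= dl -> Rabs (eta (a + b) - eta (a' + b')) <= 2 * e * dl.
Proof.
  intros. eapply Rle_trans; [apply lip2; lra|].
  replace (a + b - (a' + b')) with ((a - a') + (b - b')) by ring.
  pose proof (Rabs_triang (a - a') (b - b')). pose proof e_pos. nra.
Qed.

Lemma dbl_lip a a' dl : rL <= a <= rU -> rL <= a' <= rU -> Rabs (a - a') <= dl ->
  Rabs (eta (2 * a) - eta (2 * a')) <= 2 * e * dl.
Proof.
  intros. replace (2 * a) with (a + a) by ring. replace (2 * a') with (a' + a') by ring.
  apply pair_lip; auto.
Qed.

Definition CB (x : Z -> R) := forall j, (- N <= j <= N)%Z -> rL <= x j <= rU.

Definition PP j u y v := eta y + ca K j * eta (2 * y) + cb K j * eta (y + u) + cc K j * eta (y + v).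

Lemma range_lemma rn j u v : symmetric N rn -> CB rn -> (- N <= j <= 0)%Z ->
  rL <= u <= rU -> rL <= v <= rU ->
  PP j u rL v < gg eta N K f rn j /\ gg eta N K f rn j < PP j u rU v.
Proof.
  intros Hs Hb Hj Hu Hv. unfold gg.
  replace (psiE eta N K rn j - Q eta N K rn j - zsum (- N) j f)
    with (- (Q eta N K rn j - psiE eta N K rn j) - zsum (- N) j f) by ring.
  rewrite Gform by lia. pose proof (HPhi j ltac:(lia)) as HP.
  pose proof (pair_bnd (rn (-K)%Z) (rn (-K)%Z) (Hb (-K)%Z ltac:(lia)) (Hb (-K)%Z ltac:(lia))) as B1.
  replace (rn (-K)%Z + rn (-K)%Z) with (2 * rn (-K)%Z) in B1 by ring.
  pose proof (pair_bnd (rn (-K-1)%Z) (rn (-K)%Z) (Hb (-K-1)%Z ltac:(lia)) (Hb (-K)%Z ltac:(lia))) as B2.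
  pose proof (pair_bnd (rn (-K)%Z) (rn (-K+1)%Z) (Hb (-K)%Z ltac:(lia)) (Hb (-K+1)%Z ltac:(lia))) as B3.
  assert (HL : rL <= rL <= rU) by lra. assert (HU : rL <= rU <= rU) by lra.
  pose proof (pair_bnd rL u HL Hu) as B4. pose proof (pair_bnd rL v HL Hv) as B5.
  pose proof (pair_bnd rU u HU Hu) as B6. pose proof (pair_bnd rU v HU Hv) as B7.
  unfold PP.
  destruct (classify K j) as [[h [-> [-> [-> [-> [-> ->]]]]]]|[[h [-> [-> [-> [-> [-> ->]]]]]]|[[h [-> [-> [-> [-> [-> ->]]]]]]|[[h [-> [-> [-> [-> [-> ->]]]]]]|[h [-> [-> [-> [-> [-> ->]]]]]]]]]];
  split; lra.
Qed.

Lemma sums_bnd j : (0 <= ca K j + cb K j + cc K j <= 5/2) /\ (0 <= ga K j + gb K j + gc K j <= 4)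
  /\ 0 <= ca K j /\ 0 <= cb K j /\ 0 <= cc K j /\ 0 <= ga K j /\ 0 <= gb K j /\ 0 <= gc K j
  /\ cb K j + cc K j <= 2.
Proof.
  destruct (classify K j) as [[h [-> [-> [-> [-> [-> ->]]]]]]|[[h [-> [-> [-> [-> [-> ->]]]]]]|[[h [-> [-> [-> [-> [-> ->]]]]]]|[[h [-> [-> [-> [-> [-> ->]]]]]]|[h [-> [-> [-> [-> [-> ->]]]]]]]]]];
  repeat split; lra.
Qed.

Lemma cb_zero j : (j <= -K-1)%Z -> cb K j = 0.
Proof. intros h. unfold cb. destruct (Z.leb_spec j (-K-1)); [reflexivity|lia]. Qed.

Lemma core x y rn sn : symmetric N x -> CB x -> symmetric N y -> CB y ->
  symmetric N rn -> CB rn -> symmetric N sn -> CB sn ->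
  (forall j, (- N <= j <= 0)%Z -> psiE eta N K x j = gg eta N K f rn j) ->
  (forall j, (- N <= j <= 0)%Z -> psiE eta N K y j = gg eta N K f sn j) ->
  (d - 5 * e) * norm_inf N (fun j => x j - y j) <= 8 * e * norm_inf N (fun j => rn j - sn j).
Proof.
  intros Hsx Hbx Hsy Hby Hsr Hbr Hss Hbs Hx Hy.
  set (Dl := norm_inf N (fun j => x j - y j)). set (dl := norm_inf N (fun j => rn j - sn j)).
  assert (HD : forall i, (- N <= i <= N)%Z -> Rabs (x i - y i) <= Dl).
  { intros i Hi. apply (norm_ge N (fun j => x j - y j)). auto. }
  assert (Hd : forall i, (- N <= i <= N)%Z -> Rabs (rn i - sn i) <= dl).
  { intros i Hi. apply (norm_ge N (fun j => rn j - sn j)). auto. }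
  assert (HD0 : 0 <= Dl) by apply norm_nonneg. assert (Hd0 : 0 <= dl) by apply norm_nonneg.
  assert (Hj : exists j, (- N <= j <= 0)%Z /\ Dl = Rabs (x j - y j)).
  { destruct (norm_att N (fun j => x j - y j)) as [j0 [Hj0 Heq]]; [lia|].
    destruct (Z.le_gt_cases j0 0) as [h|h].
    - exists j0. split; [lia|exact Heq].
    - exists (- j0)%Z. split; [lia|]. rewrite (Hsx j0), (Hsy j0) by lia. exact Heq. }
  destruct Hj as [j [Hj HDj]].
  pose proof e_pos as He. pose proof d_gt as Hdg.
  pose proof (sums_bnd j) as [HS1 [HS2 [Hca [Hcb [Hcc [Hga [Hgb [Hgc _]]]]]]]].
  assert (Eq : psiE eta N K x j - psiE eta N K y j =
      - ((Q eta N K rn j - psiE eta N K rn j) - (Q eta N K sn j - psiE eta N K sn j))).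
  { rewrite Hx, Hy by auto. unfold gg. ring. }
  rewrite !Gform in Eq by lia. rewrite !psi_form in Eq by lia.
  assert (L1 : d * Dl - (ca K j * (2 * e * Dl) + cb K j * (2 * e * Dl) + cc K j * (2 * e * Dl))
     <= Rabs ((eta (x j) - eta (y j)) + ca K j * (eta (2 * x j) - eta (2 * y j))
          + cb K j * (eta (x j + x (j-1)%Z) - eta (y j + y (j-1)%Z))
          + cc K j * (eta (x j + x (j+1)%Z) - eta (y j + y (j+1)%Z)))).
  { apply abs4.
    - rewrite HDj. apply lip1; [apply Hbx|apply Hby]; lia.
    - apply abs3.
      + apply abs_scal; auto. apply dbl_lip; [apply Hbx|apply Hby|apply HD]; lia.
      + destruct (Z.le_gt_cases j (-K-1)) as [h|h].
        * rewrite cb_zero by auto. rewrite Rmult_0_l, Rabs_R0, Rmult_0_l. lra.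
        * apply abs_scal; auto. apply pair_lip; try apply Hbx; try apply Hby; try apply HD; lia.
      + apply abs_scal; auto. apply pair_lip; try apply Hbx; try apply Hby; try apply HD; lia. }
  assert (L2 : Rabs (- (ga K j * (eta (2 * rn (- K)%Z) - eta (2 * sn (- K)%Z)))
        + gb K j * (eta (rn (- K - 1)%Z + rn (- K)%Z) - eta (sn (- K - 1)%Z + sn (- K)%Z))
        + gc K j * (eta (rn (- K)%Z + rn (- K + 1)%Z) - eta (sn (- K)%Z + sn (- K + 1)%Z)))
     <= ga K j * (2 * e * dl) + gb K j * (2 * e * dl) + gc K j * (2 * e * dl)).
  { apply abs3.
    - rewrite Rabs_Ropp. apply abs_scal; auto. apply dbl_lip; [apply Hbr|apply Hbs|apply Hd]; lia.
    - apply abs_scal; auto. apply pair_lip; try apply Hbr; try apply Hbs; try apply Hd; lia.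
    - apply abs_scal; auto. apply pair_lip; try apply Hbr; try apply Hbs; try apply Hd; lia. }
  match type of L1 with _ <= Rabs ?A => replace A with (psiE eta N K x j - psiE eta N K y j) in L1
    by (rewrite !psi_form by lia; ring) end.
  match type of L2 with Rabs ?A <= _ => replace A with (psiE eta N K x j - psiE eta N K y j) in L2
    by (rewrite !psi_form by lia; rewrite Eq; ring) end.
  assert (0 <= e * Dl) by nra. assert (0 <= e * dl) by nra.
  nra.
Qed.

Lemma cum rn x : gfc_step eta N K f rn x -> forall j, (- N <= j <= 0)%Z -> psiE eta N K x j = gg eta N K f rn j.
Proof. intros H j Hj. apply (step_cum eta N K HK HKN f rn x H). lia. Qed.

Definition cl t := Rmax rL (Rmin rU t).
Lemma cl_in t : rL <= cl t <= rU.
Proof. unfold cl, Rmax, Rmin. repeat destruct Rle_dec; lra. Qed.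
Lemma cl_id t : rL <= t <= rU -> cl t = t.
Proof. intros. unfold cl, Rmax, Rmin. repeat destruct Rle_dec; lra. Qed.
Lemma cl_lip a b : Rabs (cl a - cl b) <= Rabs (a - b).
Proof. unfold cl, Rmax, Rmin. repeat destruct Rle_dec; unfold Rabs; repeat destruct Rcase_abs; lra. Qed.



Lemma PP_cont j u v g t : rL <= u -> rL <= v -> rL <= t ->
  continuity_pt (fun s => PP j u s v - g) t.
Proof.
  intros. pose proof rL_pos. unfold PP. apply continuity_pt_filterlim.
  apply (@ex_derive_continuous R_AbsRing R_NormedModule
    (fun s => eta s + ca K j * eta (2 * s) + cb K j * eta (s + u) + cc K j * eta (s + v) - g)).
  auto_derive. repeat split; try (eexists; apply Heta; lra).
Qed.

Definition sol rn j x := epsilon (inhabits 0) (fun y => rL < y < rU /\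
   PP j (cl (x (j-1)%Z)) y (cl (x (j+1)%Z)) = gg eta N K f rn j).

Lemma sol_spec rn x j : symmetric N rn -> CB rn -> (- N <= j <= 0)%Z ->
  rL < sol rn j x < rU /\ PP j (cl (x (j-1)%Z)) (sol rn j x) (cl (x (j+1)%Z)) = gg eta N K f rn j.
Proof.
  intros Hs Hb Hj. unfold sol. apply epsilon_spec.
  set (u := cl (x (j-1)%Z)). set (v := cl (x (j+1)%Z)). set (g := gg eta N K f rn j).
  pose proof (cl_in (x (j-1)%Z)) as Hu. pose proof (cl_in (x (j+1)%Z)) as Hv. fold u in Hu. fold v in Hv.
  destruct (range_lemma rn j u v Hs Hb Hj Hu Hv) as [R1 R2]. fold g in R1, R2.
  destruct (Ranalysis5.IVT_interv (fun s => PP j u s v - g) rL rU) as [z [Hz1 Hz2]].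
  - intros a Ha. apply PP_cont; lra.
  - exact HrLU.
  - lra.
  - lra.
  - exists z. assert (z <> rL) by (intros ->; lra). assert (z <> rU) by (intros ->; lra).
    split; [lra|lra].
Qed.

Definition Jac rn x j := sol rn (if (j <=? 0)%Z then j else (- j)%Z) x.

Lemma PP_split j u y v u' y' v' : PP j u y v - PP j u' y' v' =
  (eta y - eta y') + ca K j * (eta (2 * y) - eta (2 * y')) + cb K j * (eta (y + u) - eta (y' + u'))
  + cc K j * (eta (y + v) - eta (y' + v')).
Proof. unfold PP. ring. Qed.

Lemma Jac_contr rn x x' : symmetric N rn -> CB rn ->
  norm_inf N (fun j => Jac rn x j - Jac rn x' j) <= (4 * e / (d - 5 * e)) * norm_inf N (fun j => x j - x' j).
Proof.
  intros Hs Hb. set (dl := norm_inf N (fun j => x j - x' j)).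
  assert (Hd0 : 0 <= dl) by apply norm_nonneg.
  assert (Hd : forall i, (- N <= i <= N)%Z -> Rabs (x i - x' i) <= dl).
  { intros i Hi. apply (norm_ge N (fun j => x j - x' j)). auto. }
  pose proof e_pos as He. pose proof d_gt as Hdg.
  apply norm_le. { apply Rmult_le_pos; auto. apply Rmult_le_pos; [lra|]. apply Rlt_le, Rinv_0_lt_compat. lra. }
  intros j Hj. unfold Jac. set (k := if (j <=? 0)%Z then j else (- j)%Z).
  assert (Hk : (- N <= k <= 0)%Z) by (unfold k; destruct (Z.leb_spec j 0); lia).
  destruct (sol_spec rn x k Hs Hb Hk) as [Hy1 Hy2]. destruct (sol_spec rn x' k Hs Hb Hk) as [Hy1' Hy2'].
  set (y := sol rn k x) in *. set (y' := sol rn k x') in *.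
  set (u := cl (x (k-1)%Z)) in *. set (v := cl (x (k+1)%Z)) in *.
  set (u' := cl (x' (k-1)%Z)) in *. set (v' := cl (x' (k+1)%Z)) in *.
  pose proof (cl_in (x (k-1)%Z)) as Hu. pose proof (cl_in (x (k+1)%Z)) as Hv.
  pose proof (cl_in (x' (k-1)%Z)) as Hu'. pose proof (cl_in (x' (k+1)%Z)) as Hv'.
  fold u in Hu. fold v in Hv. fold u' in Hu'. fold v' in Hv'.
  pose proof (sums_bnd k) as [HS1 [HS2 [Hca [Hcb [Hcc [Hga [Hgb [Hgc Hbc]]]]]]]].
  set (Y := Rabs (y - y')).
  assert (HY0 : 0 <= Y) by apply Rabs_pos.
  assert (L1 : d * Y - (ca K k * (2 * e * Y) + cb K k * (2 * e * Y) + cc K k * (2 * e * Y))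
     <= Rabs (PP k u y v - PP k u y' v)).
  { rewrite PP_split. apply abs4.
    - apply lip1; lra.
    - apply abs3.
      + apply abs_scal; auto. apply dbl_lip; try lra. unfold Y; lra.
      + apply abs_scal; auto. apply pair_lip; unfold Y; try lra. replace (u - u) with 0 by ring. rewrite Rabs_R0. apply Rabs_pos.
      + apply abs_scal; auto. apply pair_lip; unfold Y; try lra. replace (v - v) with 0 by ring. rewrite Rabs_R0. apply Rabs_pos. }
  assert (L2 : Rabs (PP k u y' v - PP k u' y' v') <= cb K k * (2 * e * dl) + cc K k * (2 * e * dl)).
  { rewrite PP_split. replace (eta y' - eta y') with 0 by ring. replace (2 * y' - 2 * y') with 0 by ring.
    replace (eta (2 * y') - eta (2 * y')) with 0 by ring. rewrite Rmult_0_r, Rplus_0_l, Rplus_0_l.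
    eapply Rle_trans; [apply Rabs_triang|]. apply Rplus_le_compat.
    - destruct (Z.le_gt_cases k (-K-1)) as [h|h].
      + rewrite cb_zero by auto. rewrite Rmult_0_l, Rabs_R0, Rmult_0_l. lra.
      + apply abs_scal; auto. apply pair_lip; try lra.
        * replace (y' - y') with 0 by ring. rewrite Rabs_R0. lra.
        * unfold u, u'. eapply Rle_trans; [apply cl_lip| apply Hd; lia].
    - apply abs_scal; auto. apply pair_lip; try lra.
      * replace (y' - y') with 0 by ring. rewrite Rabs_R0. lra.
      * unfold v, v'. eapply Rle_trans; [apply cl_lip| apply Hd; lia]. }
  replace (PP k u y v - PP k u y' v) with (- (PP k u y' v - PP k u' y' v')) in L1
    by (unfold PP in *; lra).
  rewrite Rabs_Ropp in L1.
  assert (HYb : (d - 5 * e) * Y <= 4 * e * dl).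
  { assert (0 <= e * Y) by nra. assert (0 <= e * dl) by nra. nra. }
  fold y y'. fold Y.
  apply Rmult_le_reg_l with (r := d - 5 * e); [lra|].
  replace ((d - 5 * e) * (4 * e / (d - 5 * e) * dl)) with (4 * e * dl) by (field; lra). exact HYb.
Qed.

Lemma PP_u j u u' y v : (j <= -K-1)%Z -> PP j u y v = PP j u' y v.
Proof. intros h. unfold PP. rewrite cb_zero by auto. ring. Qed.

Lemma solver rn : symmetric N rn -> CB rn ->
  exists x, symmetric N x /\ in_Omega N rL rU x /\ gfc_step eta N K f rn x.
Proof.
  intros Hs Hb. pose proof e_pos as He. pose proof d_gt as Hdg.
  destruct (banach N (fun _ => True) (Jac rn) (4 * e / (d - 5 * e)) (fun _ => rL)) as [x [_ Hx]].
  - lia.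
  - split. { apply Rmult_le_pos; [lra|]. apply Rlt_le, Rinv_0_lt_compat. lra. }
    apply Rmult_lt_reg_r with (r := d - 5 * e); [lra|].
    replace (4 * e / (d - 5 * e) * (d - 5 * e)) with (4 * e) by (field; lra). lra.
  - auto.
  - auto.
  - intros a b _ _. apply Jac_contr; auto.
  - auto.
  - assert (HO : in_Omega N rL rU x).
    { intros j Hj. rewrite <- (Hx j Hj). unfold Jac. apply sol_spec; auto.
      destruct (Z.leb_spec j 0); lia. }
    assert (HS : symmetric N x).
    { intros j Hj. rewrite <- (Hx j) by lia. rewrite <- (Hx (-j)%Z) by lia. unfold Jac.
      destruct (Z.leb_spec (-j) 0); [|lia]. destruct (Z.leb_spec j 0); [lia|]. reflexivity. }
    exists x. split; [exact HS|]. split; [exact HO|].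
    assert (Hneg : forall j, (- N <= j <= 0)%Z -> psiE eta N K x j = gg eta N K f rn j).
    { intros j Hj. rewrite psi_form by lia.
      destruct (sol_spec rn x j Hs Hb Hj) as [_ Hp].
      assert (Hxj : x j = sol rn j x).
      { rewrite <- (Hx j) by lia. unfold Jac. destruct (Z.leb_spec j 0); [reflexivity|lia]. }
      rewrite <- Hxj in Hp. rewrite (cl_id (x (j+1)%Z)) in Hp by (pose proof (HO (j+1)%Z ltac:(lia)); lra).
      destruct (Z.le_gt_cases j (-K-1)) as [h|h].
      - rewrite (PP_u j _ (x (j-1)%Z)) in Hp by auto. rewrite <- Hp. unfold PP. ring.
      - rewrite (cl_id (x (j-1)%Z)) in Hp by (pose proof (HO (j-1)%Z ltac:(lia)); lra).
        rewrite <- Hp. unfold PP. ring. }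
    apply (step_of_cum eta N K HK HKN f). intros j Hj.
    destruct (Z.le_gt_cases j 0) as [h|h]; [apply Hneg; lia|].
    destruct (Z.eq_dec j (N+1)) as [->|hn].
    + rewrite psi_bnd by lia. rewrite gg_last by auto. reflexivity.
    + rewrite psi_sym by (auto; lia). rewrite gg_sym by (auto; lia). apply Hneg; lia.
Qed.

Lemma Om_CB x : in_Omega N rL rU x -> CB x.
Proof. intros H j Hj. specialize (H j Hj). lra. Qed.

Lemma psi_ext x y : (forall j, (- N <= j <= N)%Z -> x j = y j) ->
  forall j, (- N <= j <= 0)%Z -> psiE eta N K x j = psiE eta N K y j.
Proof.
  intros H j Hj. rewrite !psi_form by lia. rewrite (H j), (H (j+1)%Z) by lia.
  destruct (Z.le_gt_cases j (-K-1)) as [h|h].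
  - rewrite cb_zero by auto. ring.
  - rewrite (H (j-1)%Z) by lia. ring.
Qed.

Lemma norm_zero_eq x y : norm_inf N (fun j => x j - y j) <= 0 -> forall j, (- N <= j <= N)%Z -> x j = y j.
Proof.
  intros H j Hj. pose proof (norm_ge N (fun j => x j - y j) j Hj). simpl in H0.
  pose proof (Rabs_pos (x j - y j)).
  assert (Rabs (x j - y j) = 0) by lra. apply Rabs_eq_0 in H2. lra.
Qed.

Lemma norm_self x : norm_inf N (fun j => x j - x j) = 0.
Proof.
  apply Rle_antisym; [|apply norm_nonneg]. apply norm_le; [lra|].
  intros. replace (x j - x j) with 0 by ring. rewrite Rabs_R0. lra.
Qed.

Theorem main_result :
  let L := 8 * Rabs (eta1 (2 * rL)) / (eta1 rU - 5 * Rabs (eta1 (2 * rL))) in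
  L < 1 /\
  (forall rn : Z -> R, symmetric N rn -> in_Omega N rL rU rn ->
     exists rn1 : Z -> R,
       symmetric N rn1 /\ in_Omega N rL rU rn1 /\ gfc_step eta N K f rn rn1 /\
       (forall s : Z -> R, symmetric N s -> in_Omega N rL rU s ->
          gfc_step eta N K f rn s ->
          forall j : Z, (- N <= j <= N)%Z -> s j = rn1 j)) /\
  (forall rn sn rn1 sn1 : Z -> R,
     symmetric N rn -> in_Omega N rL rU rn ->
     symmetric N sn -> in_Omega N rL rU sn ->
     symmetric N rn1 -> in_Omega N rL rU rn1 -> gfc_step eta N K f rn rn1 ->
     symmetric N sn1 -> in_Omega N rL rU sn1 -> gfc_step eta N K f sn sn1 ->
     norm_inf N (fun j => rn1 j - sn1 j) <= L * norm_inf N (fun j => rn j - sn j)) /\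
  (exists r : Z -> R,
     symmetric N r /\ in_Omega N rL rU r /\ qcf_eq eta N K f r /\
     (forall s : Z -> R, symmetric N s -> in_Omega N rL rU s -> qcf_eq eta N K f s ->
        forall j : Z, (- N <= j <= N)%Z -> s j = r j) /\
     (forall rs : nat -> Z -> R,
        (forall n, symmetric N (rs n) /\ in_Omega N rL rU (rs n)) ->
        (forall n, gfc_step eta N K f (rs n) (rs (S n))) ->
        is_lim_seq (fun n => norm_inf N (fun j => rs n j - r j)) 0)).
Proof.
  intros L. pose proof e_pos as He. pose proof d_gt as Hdg.
  assert (HL : L = 8 * e / (d - 5 * e)).
  { unfold L, dd, ee. pose proof e_pos as He'. unfold ee in He'. rewrite Rabs_left by lra. reflexivity. }
  assert (HL0 : 0 <= L).
  { rewrite HL. apply Rmult_le_pos; [lra|]. apply Rlt_le, Rinv_0_lt_compat. lra. }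
  assert (HL1 : L < 1).
  { rewrite HL. apply Rmult_lt_reg_r with (r := d - 5 * e); [lra|].
    replace (8 * e / (d - 5 * e) * (d - 5 * e)) with (8 * e) by (field; lra). lra. }
  assert (Hcon : forall rn sn rn1 sn1 : Z -> R,
     symmetric N rn -> CB rn -> symmetric N sn -> CB sn ->
     symmetric N rn1 -> CB rn1 -> gfc_step eta N K f rn rn1 ->
     symmetric N sn1 -> CB sn1 -> gfc_step eta N K f sn sn1 ->
     norm_inf N (fun j => rn1 j - sn1 j) <= L * norm_inf N (fun j => rn j - sn j)).
  { intros rn sn rn1 sn1 H1 H2 H3 H4 H5 H6 H7 H8 H9 H10.
    pose proof (core rn1 sn1 rn sn H5 H6 H8 H9 H1 H2 H3 H4 (cum rn rn1 H7) (cum sn sn1 H10)) as Hc.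
    rewrite HL. apply Rmult_le_reg_l with (r := d - 5 * e); [lra|].
    replace ((d - 5 * e) * (8 * e / (d - 5 * e) * norm_inf N (fun j => rn j - sn j)))
      with (8 * e * norm_inf N (fun j => rn j - sn j)) by (field; lra). exact Hc. }
  split; [exact HL1|]. split.
  { intros rn Hs Ho. destruct (solver rn Hs (Om_CB rn Ho)) as [x [Hxs [Hxo Hxst]]].
    exists x. split; [auto|]. split; [auto|]. split; [auto|].
    intros s Hss Hso Hsst. apply norm_zero_eq.
    pose proof (Hcon rn rn s x Hs (Om_CB _ Ho) Hs (Om_CB _ Ho) Hss (Om_CB _ Hso) Hsst Hxs (Om_CB _ Hxo) Hxst).
    rewrite norm_self, Rmult_0_r in H. exact H. }
  split.
  { intros rn sn rn1 sn1 H1 H2 H3 H4 H5 H6 H7 H8 H9 H10.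
    apply Hcon; auto using Om_CB. }
  set (T := fun rn => epsilon (inhabits (fun _ : Z => 0))
     (fun x => symmetric N x /\ in_Omega N rL rU x /\ gfc_step eta N K f rn x)).
  assert (HT : forall rn, symmetric N rn -> CB rn ->
     symmetric N (T rn) /\ in_Omega N rL rU (T rn) /\ gfc_step eta N K f rn (T rn)).
  { intros rn Hs Hb. unfold T. apply epsilon_spec. apply solver; auto. }
  destruct (banach N (fun x => symmetric N x /\ CB x) T L (fun _ => (rL + rU) / 2)) as [r [[Hrs Hrb] Hr]].
  - lia.
  - lra.
  - split; [intros j Hj; reflexivity| intros j Hj; lra].
  - intros x [Hs Hb]. destruct (HT x Hs Hb) as [A [B C]]. split; auto using Om_CB.
  - intros x y [Hxs Hxb] [Hys Hyb]. destruct (HT x Hxs Hxb) as [A [B C]]. destruct (HT y Hys Hyb) as [A' [B' C']].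
    apply Hcon; auto using Om_CB.
  - intros u l Hu Hl. split.
    + intros j Hj. apply (UL_sequence (fun n => u n j)).
      * apply Un_cv_ext with (fun n => u n (-j)%Z); [|apply Hl; lia]. intros n. apply (proj1 (Hu n)); auto.
      * apply Hl; lia.
    + intros j Hj. apply (lim_in (fun n => u n j)); [apply Hl; auto|]. intros n. apply (proj2 (Hu n)); auto.
  - destruct (HT r Hrs Hrb) as [HTs [HTo HTst]].
    assert (Hro : in_Omega N rL rU r) by (intros j Hj; rewrite <- (Hr j Hj); apply HTo; auto).
    assert (Hcum : forall j, (- N <= j <= N + 1)%Z -> psiE eta N K r j = gg eta N K f r j).
    { assert (Hneg : forall j, (- N <= j <= 0)%Z -> psiE eta N K r j = gg eta N K f r j).
      { intros j Hj. rewrite (psi_ext r (T r)) by (auto; intros; symmetry; apply Hr; auto).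
        apply cum; auto. }
      intros j Hj. destruct (Z.le_gt_cases j 0) as [h|h]; [apply Hneg; lia|].
      destruct (Z.eq_dec j (N+1)) as [->|hn].
      + rewrite psi_bnd by lia. rewrite gg_last by auto. reflexivity.
      + rewrite psi_sym by (auto; lia). rewrite gg_sym by (auto; lia). apply Hneg; lia. }
    assert (Hst : gfc_step eta N K f r r) by (apply (step_of_cum eta N K HK HKN f); auto).
    exists r. split; [auto|]. split; [auto|]. split; [apply qcf_step; auto|]. split.
    + intros s Hss Hso Hsq. apply qcf_step in Hsq.
      pose proof (core s r s r Hss (Om_CB _ Hso) Hrs Hrb Hss (Om_CB _ Hso) Hrs Hrb (cum s s Hsq) (cum r r Hst)) as Hc.
      apply norm_zero_eq.
      pose proof (norm_nonneg N (fun j => s j - r j)). nra.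
    + intros rs Hrs1 Hrs2.
      set (a := fun n => norm_inf N (fun j => rs n j - r j)).
      assert (Ha : forall n, a (S n) <= L * a n).
      { intros n. unfold a. destruct (Hrs1 n) as [A B]. destruct (Hrs1 (S n)) as [A' B'].
        apply Hcon; auto using Om_CB. }
      assert (Ha2 : forall n, 0 <= a n <= a 0%nat * L ^ n).
      { induction n as [|n IH].
        - split; [apply norm_nonneg|]. simpl. lra.
        - split; [apply norm_nonneg|]. simpl. specialize (Ha n). destruct IH as [_ IH].
          apply Rmult_le_compat_l with (r := L) in IH; [|lra]. nra. }
      apply is_lim_seq_le_le with (u := fun _ => 0) (w := fun n => a 0%nat * L ^ n).
      * exact Ha2.
      * apply is_lim_seq_const.
      * replace (Finite 0) with (Rbar_mult (a 0%nat) 0) by (simpl; f_equal; ring).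
        apply is_lim_seq_scal_l. apply is_lim_seq_geom. rewrite Rabs_pos_eq; lra.
Qed.

End Main.


Theorem corollary5p2
  (phi eta eta1 eta2 : R -> R)
  (Hphi : forall r, 0 < r -> is_derive phi r (eta r))
  (Heta : forall r, 0 < r -> is_derive eta r (eta1 r))
  (Heta1 : forall r, 0 < r -> is_derive eta1 r (eta2 r))
  (Heta2c : forall r, 0 < r -> continuous eta2 r)
  (a0 r1t r2t a1 : R)
  (Hconst : 0 < a0 /\ a0 < r1t /\ r1t < r2t /\ r2t < 2 * a0 /\ a0 < a1)
  (H1a : forall r, 0 < r < r1t -> eta1 r > 0)
  (H1b : forall r, r > r1t -> eta1 r < 0)
  (H2a : forall r, 0 < r < r2t -> eta2 r < 0)
  (H2b : forall r, r > r2t -> eta2 r > 0)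
  (H3a : forall r, 0 < r < a0 -> etahat eta r < 0)
  (H3b : forall r, r > a0 -> etahat eta r > 0)
  (H4a : forall r, 0 < r < a1 -> Derive (etahat eta) r > 0)
  (H4b : forall r, r > a1 -> Derive (etahat eta) r < 0)
  (N K : Z) (HK : (2 <= K)%Z) (HKN : (K < N - 1)%Z)
  (f : Z -> R)
  (Hf : forall j : Z, (0 <= j <= N)%Z -> f (j + 1)%Z = - f (- j)%Z)
  (rL rU : R)
  (HrL : r2t / 2 < rL) (HrLU : rL < rU)
  (Hder : eta1 rU + 13 * eta1 (2 * rL) > 0)
  (HPhi : forall j : Z, (- N <= j <= N)%Z ->
     eta rL + 4 * eta (2 * rL) - 2 * eta (2 * rU) < - zsum (- N) j f /\
     - zsum (- N) j f < eta rU + 4 * eta (2 * rU) - 2 * eta (2 * rL)) :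
  let L := 8 * Rabs (eta1 (2 * rL)) / (eta1 rU - 5 * Rabs (eta1 (2 * rL))) in
  L < 1 /\
  (forall rn : Z -> R, symmetric N rn -> in_Omega N rL rU rn ->
     exists rn1 : Z -> R,
       symmetric N rn1 /\ in_Omega N rL rU rn1 /\ gfc_step eta N K f rn rn1 /\
       (forall s : Z -> R, symmetric N s -> in_Omega N rL rU s ->
          gfc_step eta N K f rn s ->
          forall j : Z, (- N <= j <= N)%Z -> s j = rn1 j)) /\
  (forall rn sn rn1 sn1 : Z -> R,
     symmetric N rn -> in_Omega N rL rU rn ->
     symmetric N sn -> in_Omega N rL rU sn ->
     symmetric N rn1 -> in_Omega N rL rU rn1 -> gfc_step eta N K f rn rn1 ->
     symmetric N sn1 -> in_Omega N rL rU sn1 -> gfc_step eta N K f sn sn1 ->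
     norm_inf N (fun j => rn1 j - sn1 j) <= L * norm_inf N (fun j => rn j - sn j)) /\
  (exists r : Z -> R,
     symmetric N r /\ in_Omega N rL rU r /\ qcf_eq eta N K f r /\
     (forall s : Z -> R, symmetric N s -> in_Omega N rL rU s -> qcf_eq eta N K f s ->
        forall j : Z, (- N <= j <= N)%Z -> s j = r j) /\
     (forall rs : nat -> Z -> R,
        (forall n, symmetric N (rs n) /\ in_Omega N rL rU (rs n)) ->
        (forall n, gfc_step eta N K f (rs n) (rs (S n))) ->
        is_lim_seq (fun n => norm_inf N (fun j => rs n j - r j)) 0)).
Proof.
  destruct Hconst as [Hc1 [Hc2 [Hc3 [Hc4 Hc5]]]].
  exact (main_result eta eta1 eta2 Heta Heta1 r1t r2t ltac:(lra) Hc3 H1b H2a H2b rL rU HrL HrLU Hder N K HK HKN f Hf HPhi).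
Qed.
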